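(* For every monotone submodular function $f:2^{[3]}\to\mathbb{R}_+$ and every $\mathbf{x}\in[0,1]^3$, $f^{+}(\mathbf{x})/f^{++}(\mathbf{x})\le4/3$ (with the convention $0/0=1$).
   Context: $[n]=\{1,\dots,n\}$. A set function $f:2^{[n]}\to\mathbb{R}_+$ is monotone if $f(S)\le f(T)$ for $S\subseteq T$, submodular if $f(S)+f(T)\ge f(S\cap T)+f(S\cup T)$. For $\mathbf{x}\in[0,1]^n$: the concave closure $f^{+}(\mathbf{x})=\max\sum_{S\subseteq[n]}\theta(S)f(S)$ over $\theta:2^{[n]}\to\mathbb{R}_{\ge0}$ with $\sum_S\theta(S)=1$ and $\sum_{S\ni i}\theta(S)=x_i$ for all $i$; the upper pairwise independent extension $f^{++}(\mathbf{x})$ is the same maximum with the additional constraints $\sum_{S\ni i,j}\theta(S)=x_ix_j$ for all $i<j$. *)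

(* Defs.v *)
From HB Require Import structures.
From mathcomp Require Import all_boot all_order all_algebra.
From mathcomp Require Import classical_sets reals.
Set Implicit Arguments. Unset Strict Implicit. Unset Printing Implicit Defensive.
Import Order.TTheory GRing.Theory Num.Theory.
Local Open Scope ring_scope.
Local Open Scope classical_set_scope.

Definition monotone_setfun (R : realType) (n : nat) (f : {set 'I_n} -> R) :=
  forall S T : {set 'I_n}, S \subset T -> f S <= f T.

Definition submodular_setfun (R : realType) (n : nat) (f : {set 'I_n} -> R) :=
  forall S T : {set 'I_n}, f (S :&: T) + f (S :|: T) <= f S + f T.

Definition cc_feasible (R : realType) (n : nat) (x : 'I_n -> R)
    (theta : {set 'I_n} -> R) : Prop :=
  (forall S, 0 <= theta S) /\
  (\sum_(S : {set 'I_n}) theta S = 1) /\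
  (forall i : 'I_n, \sum_(S : {set 'I_n} | i \in S) theta S = x i).

Definition pi_feasible (R : realType) (n : nat) (x : 'I_n -> R)
    (theta : {set 'I_n} -> R) : Prop :=
  cc_feasible x theta /\
  (forall i j : 'I_n, (i < j)%N ->
     \sum_(S : {set 'I_n} | (i \in S) && (j \in S)) theta S = x i * x j).

Definition objective (R : realType) (n : nat) (f : {set 'I_n} -> R)
    (theta : {set 'I_n} -> R) : R :=
  \sum_(S : {set 'I_n}) theta S * f S.

Definition concave_closure (R : realType) (n : nat) (f : {set 'I_n} -> R)
    (x : 'I_n -> R) : R :=
  sup [set objective f theta | theta in [set theta | cc_feasible x theta]].

Definition upper_pi_ext (R : realType) (n : nat) (f : {set 'I_n} -> R)
    (x : 'I_n -> R) : R :=
  sup [set objective f theta | theta in [set theta | pi_feasible x theta]].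

(* Main.v *)
Require Import Defs.
From HB Require Import structures.
From mathcomp Require Import all_boot all_order all_algebra.
From mathcomp Require Import classical_sets reals.
From mathcomp Require Import ring lra.
Import Order.TTheory GRing.Theory Num.Theory.
Local Open Scope ring_scope.
Lemma pairb {R : realFieldType} (a b m : R) : 0 <= a <= 1 -> 0 <= b <= 1 -> m <= a + b -> m <= 1 ->
  m <= 4/3 * (a + b - a * b).
Proof.
move=> /andP[a0 a1] /andP[b0 b1] h1 h2.
have hs : 0 <= (a - b)^+2 by apply: sqr_ge0.
case: (lerP (a + b) 1) => hab.
- nra.
- nra.
Qed.
Lemma tmaxb {R : realFieldType} (a b c m : R) : 0 <= a <= 1 -> 0 <= b <= 1 -> 0 <= c <= 1 ->
  m <= a + b + c -> m <= 1 ->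
  m <= 4/3 * (a + b + c - a*b - a*c - b*c + a * b).
Proof.
move=> /andP[a0 a1] /andP[b0 b1] /andP[c0 c1] h1 h2.
have hs : 0 <= (2*(a + b) - 1)^+2 by apply: sqr_ge0.
case: (lerP (a + b) 1) => hab.
- case: (lerP (a + b + c) 1) => habc.
  + case: (lerP (a + b) (1/4)) => hq.
    * have : 0 <= c * (1 - 4 * (a + b)) by apply: mulr_ge0; lra.
      nra.
    * have : 0 <= (1 - (a + b) - c) * (4 * (a + b) - 1) by apply: mulr_ge0; lra.
      nra.
  + nra.
- nra.
Qed.
Lemma tpb {R : realFieldType} (a b c m : R) : 0 <= a <= 1 -> 0 <= b <= 1 -> 0 <= c <= 1 ->
  m <= a + b + c -> m <= 2 ->
  m <= 4/3 * (a + b + c - a*b*c).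
Proof.
move=> /andP[a0 a1] /andP[b0 b1] /andP[c0 c1] h1 h2.
have hab : 4 * (a * b) <= (a + b) ^+ 2.
  have : 0 <= (a - b)^+2 by apply: sqr_ge0. nra.
have ab0 : 0 <= a * b by apply: mulr_ge0.
have ab1 : a * b <= 1 by nra.
case: (lerP (a + b + c) 2) => hs.
- suff : 4 * (a * b * c) <= a + b + c by lra.
  have e1 : 4 * (a * b * c) <= (a + b)^+2 * c by rewrite -mulrA; nra.
  case: (lerP (a + b) 1) => hv.
  + have : (a + b)^+2 * c <= (a + b) by nra.
    lra.
  + have hc : c <= 2 - (a + b) by lra.
    have : (a + b)^+2 * c - c <= (2 - (a + b)) * ((a+b)^+2 - 1).
      have : 0 <= (a+b)^+2 - 1 by nra.
      nra.
    have : (2 - (a + b)) * ((a+b)^+2 - 1) <= a + b.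
      have : 0 <= (a + b - 1)^+2 by apply: sqr_ge0.
      nra.
    lra.
- suff : 3/2 <= a + b + c - a * b * c by lra.
  have hc : 2 - (a + b) <= c by lra.
  have e1 : (2 - (a + b)) * (1 - a * b) <= c * (1 - a * b) by apply: ler_wpM2r; lra.
  have e2 : a * b * (2 - (a + b)) <= (a+b)^+2/4 * (2 - (a + b)).
    apply: ler_wpM2r; lra.
  have e3 : (a+b)^+2 * (2 - (a + b)) <= 2.
    have : 0 <= (a + b - 1)^+2 by apply: sqr_ge0.
    nra.
  nra.
Qed.
Lemma fin {R : realFieldType} (e A0 A1 A2 B01 B02 B12 G x0 x1 x2 M01 M02 M12 M N01 N02 N12 N : R) :
 0 <= e -> 0 <= A0 -> 0 <= A1 -> 0 <= A2 -> 0 <= x0 -> 0 <= x1 -> 0 <= x2 ->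
 0 <= B01 -> 0 <= B02 -> 0 <= B12 -> 0 <= G ->
 M01 <= 4/3 * N01 -> M02 <= 4/3 * N02 -> M12 <= 4/3 * N12 -> M <= 4/3 * N ->
 e + A0*x0 + A1*x1 + A2*x2 + B01*M01 + B02*M02 + B12*M12 + G*M <=
 4/3 * (e + A0*x0 + A1*x1 + A2*x2 + B01*N01 + B02*N02 + B12*N12 + G*N).
Proof.
move=> he ha0 ha1 ha2 hx0 hx1 hx2 hb01 hb02 hb12 hg h1 h2 h3 h4.
have := ler_wpM2l hb01 h1. have := ler_wpM2l hb02 h2.
have := ler_wpM2l hb12 h3. have := ler_wpM2l hg h4.
have := mulr_ge0 ha0 hx0. have := mulr_ge0 ha1 hx1. have := mulr_ge0 ha2 hx2.
lra.
Qed.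
Lemma tmin_cases {R : realFieldType} (a b c d : R) :
  let t := Num.min (Num.min a b) (Num.min c d) in
  [/\ t <= a, t <= b, t <= c, t <= d & [\/ t = a, t = b, t = c | t = d]].
Proof.
move=> t; split.
- by rewrite /t !ge_min lexx.
- by rewrite /t !ge_min lexx !orbT.
- by rewrite /t !ge_min lexx !orbT.
- by rewrite /t !ge_min lexx !orbT.
rewrite /t !minEle; repeat case: ifP => _; by [constructor 1|constructor 2|constructor 3|constructor 4].
Qed.
Definition feasT {R : realFieldType} (x0 x1 x2 t : R) :=
  (0 <= t) /\ (0 <= x0*x1 - t) /\ (0 <= x0*x2 - t) /\ (0 <= x1*x2 - t) /\
  (0 <= x0 - x0*x1 - x0*x2 + t) /\ (0 <= x1 - x0*x1 - x1*x2 + t) /\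
  (0 <= x2 - x0*x2 - x1*x2 + t) /\
  (0 <= 1 - x0 - x1 - x2 + x0*x1 + x0*x2 + x1*x2 - t).

Lemma candL {R : realFieldType} (a b c : R) : 0 <= a <= 1 -> 0 <= b <= 1 -> 0 <= c <= 1 ->
  [/\ 0 <= a * b, 0 <= a - a*b - a*c + a*b, 0 <= b - a*b - b*c + a*b
   & 0 <= c - a*c - b*c + a*b].
Proof.
move=> /andP[a0 a1] /andP[b0 b1] /andP[c0 c1].
have h1 : 0 <= (1 - a) * (1 - b) by apply: mulr_ge0; lra.
have h2 : 0 <= c * ((1 - a) * (1 - b)) by apply: mulr_ge0.
have h3 : 0 <= a * b by apply: mulr_ge0.
have h4 : 0 <= (a * b) * (1 - c) by apply: mulr_ge0; lra.
split => //; nra.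
Qed.

Lemma tmax_ex {R : realFieldType} (x0 x1 x2 : R) : 0 <= x0 <= 1 -> 0 <= x1 <= 1 -> 0 <= x2 <= 1 ->
  exists t, feasT x0 x1 x2 t /\ forall m, m <= x0 + x1 + x2 -> m <= 1 ->
     m <= 4/3 * (x0 + x1 + x2 - x0*x1 - x0*x2 - x1*x2 + t).
Proof.
move=> h0 h1 h2.
have /andP[a0 a1] := h0; have /andP[b0 b1] := h1; have /andP[c0 c1] := h2.
pose T0 := 1 - x0 - x1 - x2 + x0*x1 + x0*x2 + x1*x2.
have T0E : T0 = 1 - x0 - x1 - x2 + x0*x1 + x0*x2 + x1*x2 by [].
have [ta tb tc td teq] := tmin_cases (x0*x1) (x0*x2) (x1*x2) T0.
set t := Num.min _ _ in ta tb tc td teq.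
exists t.
have hT0 : 0 <= T0.
  have : 0 <= (1 - x0) * (1 - x1) * (1 - x2) by apply: mulr_ge0; [apply: mulr_ge0|]; lra.
  have : 0 <= x0 * x1 * x2 by apply: mulr_ge0; [apply: mulr_ge0|]; lra.
  rewrite T0E; nra.
have k0 : 0 <= (1 - x1) * (1 - x2) by apply: mulr_ge0; lra.
have k1 : 0 <= (1 - x0) * (1 - x2) by apply: mulr_ge0; lra.
have k2 : 0 <= (1 - x0) * (1 - x1) by apply: mulr_ge0; lra.
case: teq => teq; rewrite teq in ta tb tc td *.
- have [? ? ? ?] := candL x0 x1 x2 h0 h1 h2.
  split; first (rewrite /feasT; lra).
  move=> m hm1 hm2; have := tmaxb x0 x1 x2 m h0 h1 h2 hm1 hm2; lra.
- have [? ? ? ?] := candL x0 x2 x1 h0 h2 h1.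
  split; first (rewrite /feasT; lra).
  move=> m hm1 hm2; have := @tmaxb _ x0 x2 x1 m h0 h2 h1 ltac:(lra) hm2; lra.
- have [? ? ? ?] := candL x1 x2 x0 h1 h2 h0.
  split; first (rewrite /feasT; lra).
  move=> m hm1 hm2; have := @tmaxb _ x1 x2 x0 m h1 h2 h0 ltac:(lra) hm2; lra.
- split; first (rewrite /feasT /T0 in ta tb tc hT0 *; lra).
  move=> m hm1 hm2; rewrite /T0; lra.
Qed.

Lemma tp_ok {R : realFieldType} (x0 x1 x2 : R) : 0 <= x0 <= 1 -> 0 <= x1 <= 1 -> 0 <= x2 <= 1 ->
  feasT x0 x1 x2 (x0*x1*x2) /\ forall m, m <= x0 + x1 + x2 -> m <= 2 ->
     m <= 4/3 * (x0 + x1 + x2 - x0*x1*x2).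
Proof.
move=> h0 h1 h2.
have /andP[a0 a1] := h0; have /andP[b0 b1] := h1; have /andP[c0 c1] := h2.
split; last by move=> m hm1 hm2; apply: tpb.
have p0 : 0 <= x0 * x1 by apply: mulr_ge0.
have p1 : 0 <= x0 * x2 by apply: mulr_ge0.
have p2 : 0 <= x1 * x2 by apply: mulr_ge0.
have q0 : 0 <= x0 * x1 * (1 - x2) by apply: mulr_ge0; lra.
have q1 : 0 <= x0 * x2 * (1 - x1) by apply: mulr_ge0; lra.
have q2 : 0 <= x1 * x2 * (1 - x0) by apply: mulr_ge0; lra.
have r0 : 0 <= x0 * ((1 - x1) * (1 - x2)) by apply: mulr_ge0 => //; apply: mulr_ge0; lra.
have r1 : 0 <= x1 * ((1 - x0) * (1 - x2)) by apply: mulr_ge0 => //; apply: mulr_ge0; lra.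
have r2 : 0 <= x2 * ((1 - x0) * (1 - x1)) by apply: mulr_ge0 => //; apply: mulr_ge0; lra.
have r3 : 0 <= (1 - x0) * (1 - x1) * (1 - x2) by apply: mulr_ge0; [apply: mulr_ge0|]; lra.
have r4 : 0 <= x0 * x1 * x2 by apply: mulr_ge0.
rewrite /feasT; nra.
Qed.
Definition objv {R : realFieldType} (e a0 a1 a2 b01 b02 b12 c u p0 p1 p2 q01 q02 q12 r : R) :=
  u*e + p0*a0 + p1*a1 + p2*a2 + q01*b01 + q02*b02 + q12*b12 + r*c.
Definition objt {R : realFieldType} (e a0 a1 a2 b01 b02 b12 c x0 x1 x2 t : R) :=
  objv e a0 a1 a2 b01 b02 b12 c
   (1 - x0 - x1 - x2 + x0*x1 + x0*x2 + x1*x2 - t)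
   (x0 - x0*x1 - x0*x2 + t) (x1 - x0*x1 - x1*x2 + t) (x2 - x0*x2 - x1*x2 + t)
   (x0*x1 - t) (x0*x2 - t) (x1*x2 - t) t.

Lemma coreA {R : realFieldType} (e a0 a1 a2 b01 b02 b12 c u p0 p1 p2 q01 q02 q12 r x0 x1 x2 t : R) :
  0 <= x0 <= 1 -> 0 <= x1 <= 1 -> 0 <= x2 <= 1 ->
  0 <= u -> 0 <= p0 -> 0 <= p1 -> 0 <= p2 -> 0 <= q01 -> 0 <= q02 -> 0 <= q12 -> 0 <= r ->
  u + p0 + p1 + p2 + q01 + q02 + q12 + r = 1 ->
  x0 = p0 + q01 + q02 + r -> x1 = p1 + q01 + q12 + r -> x2 = p2 + q02 + q12 + r ->
  0 <= e -> 0 <= c - b12 -> 0 <= c - b02 -> 0 <= c - b01 ->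
  0 <= b02 + b12 - a2 - c -> 0 <= b01 + b12 - a1 - c -> 0 <= b01 + b02 - a0 - c ->
  0 <= c - b01 - b02 - b12 + a0 + a1 + a2 - e ->
  (forall m, m <= x0 + x1 + x2 -> m <= 1 ->
     m <= 4/3 * (x0 + x1 + x2 - x0*x1 - x0*x2 - x1*x2 + t)) ->
  objv e a0 a1 a2 b01 b02 b12 c u p0 p1 p2 q01 q02 q12 r <=
  4/3 * objt e a0 a1 a2 b01 b02 b12 c x0 x1 x2 t.
Proof.
move=> h0 h1 h2 hu hp0 hp1 hp2 hq01 hq02 hq12 hr hs hx0 hx1 hx2 he hA0 hA1 hA2
  hB01 hB02 hB12 hG htb.
have /andP[a0' a1'] := h0; have /andP[b0' b1'] := h1; have /andP[c0' c1'] := h2.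
have E1 : objv e a0 a1 a2 b01 b02 b12 c u p0 p1 p2 q01 q02 q12 r =
  e + (c - b12) * x0 + (c - b02) * x1 + (c - b01) * x2 +
  (b02 + b12 - a2 - c) * (1 - u - p2) + (b01 + b12 - a1 - c) * (1 - u - p1) +
  (b01 + b02 - a0 - c) * (1 - u - p0) +
  (c - b01 - b02 - b12 + a0 + a1 + a2 - e) * (1 - u).
  have hu' : u = 1 - (p0 + p1 + p2 + q01 + q02 + q12 + r) by lra.
  rewrite /objv hx0 hx1 hx2 hu'; ring.
have E2 : objt e a0 a1 a2 b01 b02 b12 c x0 x1 x2 t =
  e + (c - b12) * x0 + (c - b02) * x1 + (c - b01) * x2 +
  (b02 + b12 - a2 - c) * (x0 + x1 - x0*x1) + (b01 + b12 - a1 - c) * (x0 + x2 - x0*x2) +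
  (b01 + b02 - a0 - c) * (x1 + x2 - x1*x2) +
  (c - b01 - b02 - b12 + a0 + a1 + a2 - e) * (x0 + x1 + x2 - x0*x1 - x0*x2 - x1*x2 + t).
  rewrite /objt /objv; ring.
rewrite E1 E2; apply: fin => //.
- by apply: pairb => //; lra.
- by apply: pairb => //; lra.
- by apply: pairb => //; lra.
- by apply: htb; lra.
Qed.

Lemma coreB {R : realFieldType} (e a0 a1 a2 b01 b02 b12 c u p0 p1 p2 q01 q02 q12 r x0 x1 x2 : R) :
  0 <= x0 <= 1 -> 0 <= x1 <= 1 -> 0 <= x2 <= 1 ->
  0 <= u -> 0 <= p0 -> 0 <= p1 -> 0 <= p2 -> 0 <= q01 -> 0 <= q02 -> 0 <= q12 -> 0 <= r ->
  u + p0 + p1 + p2 + q01 + q02 + q12 + r = 1 ->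
  x0 = p0 + q01 + q02 + r -> x1 = p1 + q01 + q12 + r -> x2 = p2 + q02 + q12 + r ->
  0 <= e -> 0 <= c - b12 -> 0 <= c - b02 -> 0 <= c - b01 ->
  0 <= a0 + a1 - b01 - e -> 0 <= a0 + a2 - b02 - e -> 0 <= a1 + a2 - b12 - e ->
  c - b01 - b02 - b12 + a0 + a1 + a2 - e <= 0 ->
  objv e a0 a1 a2 b01 b02 b12 c u p0 p1 p2 q01 q02 q12 r <=
  4/3 * objt e a0 a1 a2 b01 b02 b12 c x0 x1 x2 (x0 * x1 * x2).
Proof.
move=> h0 h1 h2 hu hp0 hp1 hp2 hq01 hq02 hq12 hr hs hx0 hx1 hx2 he hA0 hA1 hA2
  hB01 hB02 hB12 hG.
have /andP[a0' a1'] := h0; have /andP[b0' b1'] := h1; have /andP[c0' c1'] := h2.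
have E1 : objv e a0 a1 a2 b01 b02 b12 c u p0 p1 p2 q01 q02 q12 r =
  e + (c - b12) * x0 + (c - b02) * x1 + (c - b01) * x2 +
  (a0 + a1 - b01 - e) * (1 - u - p2) + (a0 + a2 - b02 - e) * (1 - u - p1) +
  (a1 + a2 - b12 - e) * (1 - u - p0) +
  (- (c - b01 - b02 - b12 + a0 + a1 + a2 - e)) * (x0 + x1 + x2 - r).
  have hu' : u = 1 - (p0 + p1 + p2 + q01 + q02 + q12 + r) by lra.
  rewrite /objv hx0 hx1 hx2 hu'; ring.
have E2 : objt e a0 a1 a2 b01 b02 b12 c x0 x1 x2 (x0 * x1 * x2) =
  e + (c - b12) * x0 + (c - b02) * x1 + (c - b01) * x2 +
  (a0 + a1 - b01 - e) * (x0 + x1 - x0*x1) + (a0 + a2 - b02 - e) * (x0 + x2 - x0*x2) +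
  (a1 + a2 - b12 - e) * (x1 + x2 - x1*x2) +
  (- (c - b01 - b02 - b12 + a0 + a1 + a2 - e)) * (x0 + x1 + x2 - x0 * x1 * x2).
  rewrite /objt /objv; ring.
rewrite E1 E2; apply: fin => //; try lra.
- by apply: pairb => //; lra.
- by apply: pairb => //; lra.
- by apply: pairb => //; lra.
- by apply: tpb => //; lra.
Qed.

Definition o0 : 'I_3 := ord0.
Definition o1 : 'I_3 := Ordinal (isT : (1 < 3)%N).
Definition o2 : 'I_3 := Ordinal (isT : (2 < 3)%N).
Definition mk (b0 b1 b2 : bool) : {set 'I_3} :=
  [set i | [|| (i == o0) && b0, (i == o1) && b1 | (i == o2) && b2]].
Lemma ord3P (i : 'I_3) : [\/ i = o0, i = o1 | i = o2].
Proof.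
case: i => [[|[|[|m]]] Hm].
- by constructor 1; apply: val_inj.
- by constructor 2; apply: val_inj.
- by constructor 3; apply: val_inj.
- by [].
Qed.
Lemma mk0 b0 b1 b2 : (o0 \in mk b0 b1 b2) = b0.
Proof. by rewrite inE /=; case: b0. Qed.
Lemma mk1 b0 b1 b2 : (o1 \in mk b0 b1 b2) = b1.
Proof. by rewrite inE /=; case: b1; rewrite ?orbF ?orbT. Qed.
Lemma mk2 b0 b1 b2 : (o2 \in mk b0 b1 b2) = b2.
Proof. by rewrite inE /=; case: b2; rewrite ?orbF ?orbT. Qed.
Lemma sum3 (R : nmodType) (g : {set 'I_3} -> R) :
  \sum_(S : {set 'I_3}) g S =
  \sum_(b0 : bool) \sum_(b1 : bool) \sum_(b2 : bool) g (mk b0 b1 b2).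
Proof.
pose h (p : bool * (bool * bool)) := mk p.1 p.2.1 p.2.2.
pose k (S : {set 'I_3}) := (o0 \in S, (o1 \in S, o2 \in S)).
rewrite (reindex h); last first.
  exists k => [[b0 [b1 b2]]|S] _; first by rewrite /k /h /= mk0 mk1 mk2.
  apply/setP => i; rewrite /h /k /= inE.
  by case: (ord3P i) => ->; case: (o0 \in S); case: (o1 \in S); case: (o2 \in S).
rewrite -(pair_bigA _ (fun b0 (q : bool * bool) => g (mk b0 q.1 q.2))) /=.
apply: eq_bigr => b0 _.
by rewrite -(pair_bigA _ (fun b1 b2 => g (mk b0 b1 b2))).
Qed.
Lemma sum3E (R : nmodType) (g : {set 'I_3} -> R) :
  \sum_(S : {set 'I_3}) g S =
  g (mk true true true) + g (mk true true false) + (g (mk true false true) + g (mk true false false))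
  + (g (mk false true true) + g (mk false true false) + (g (mk false false true) + g (mk false false false))).
Proof. by rewrite sum3 !big_bool. Qed.
Lemma mkI a0 a1 a2 b0 b1 b2 :
  mk a0 a1 a2 :&: mk b0 b1 b2 = mk (a0 && b0) (a1 && b1) (a2 && b2).
Proof. by apply/setP => i; case: (ord3P i) => ->; rewrite finset.in_setI ?mk0 ?mk1 ?mk2. Qed.
Lemma mkU a0 a1 a2 b0 b1 b2 :
  mk a0 a1 a2 :|: mk b0 b1 b2 = mk (a0 || b0) (a1 || b1) (a2 || b2).
Proof. by apply/setP => i; case: (ord3P i) => ->; rewrite finset.in_setU ?mk0 ?mk1 ?mk2. Qed.
Lemma mk_sub a0 a1 a2 b0 b1 b2 : a0 ==> b0 -> a1 ==> b1 -> a2 ==> b2 ->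
  mk a0 a1 a2 \subset mk b0 b1 b2.
Proof.
move=> h0 h1 h2; apply/fintype.subsetP => i; case: (ord3P i) => ->;
  rewrite ?mk0 ?mk1 ?mk2; apply/implyP; done.
Qed.

Definition thetaT {R : realType} (x : 'I_3 -> R) (t : R) (S : {set 'I_3}) : R :=
  let y0 := x o0 in let y1 := x o1 in let y2 := x o2 in
  match o0 \in S, o1 \in S, o2 \in S with
  | true, true, true => t
  | true, true, false => y0*y1 - t
  | true, false, true => y0*y2 - t
  | false, true, true => y1*y2 - t
  | true, false, false => y0 - y0*y1 - y0*y2 + t
  | false, true, false => y1 - y0*y1 - y1*y2 + t
  | false, false, true => y2 - y0*y2 - y1*y2 + t
  | false, false, false => 1 - y0 - y1 - y2 + y0*y1 + y0*y2 + y1*y2 - t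
  end.

Lemma thetaT_pi {R : realType} (x : 'I_3 -> R) t :
  feasT (x o0) (x o1) (x o2) t -> pi_feasible x (thetaT x t).
Proof.
move=> [f1 [f2 [f3 [f4 [f5 [f6 [f7 f8]]]]]]].
split; [split; [|split]|].
- move=> S; rewrite /thetaT.
  by case: (o0 \in S); case: (o1 \in S); case: (o2 \in S).
- rewrite sum3E /thetaT !mk0 !mk1 !mk2 /=; ring.
- move=> i; rewrite big_mkcond sum3E /=.
  by case: (ord3P i) => ->; rewrite /thetaT !mk0 !mk1 !mk2 /=; ring.
- move=> i j; case: (ord3P i) => ->; case: (ord3P j) => -> // _;
  by rewrite big_mkcond sum3E /= /thetaT !mk0 !mk1 !mk2 /=; ring.
Qed.
Lemma cc_vals {R : realType} (x : 'I_3 -> R) (th : {set 'I_3} -> R) :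
  cc_feasible x th ->
  [/\ forall S, 0 <= th S,
   th (mk false false false) + th (mk true false false) + th (mk false true false)
   + th (mk false false true) + th (mk true true false) + th (mk true false true)
   + th (mk false true true) + th (mk true true true) = 1,
   x o0 = th (mk true false false) + th (mk true true false) + th (mk true false true)
          + th (mk true true true),
   x o1 = th (mk false true false) + th (mk true true false) + th (mk false true true)
          + th (mk true true true) &
   x o2 = th (mk false false true) + th (mk true false true) + th (mk false true true)
          + th (mk true true true)].
Proof.
move=> [h0 [h1 h2]]; split => //.
- rewrite -h1 sum3E; ring.
- rewrite -(h2 o0) big_mkcond sum3E /= !mk0 /=; ring.
- rewrite -(h2 o1) big_mkcond sum3E /= !mk1 /=; ring.
- rewrite -(h2 o2) big_mkcond sum3E /= !mk2 /=; ring.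
Qed.

Lemma obj_exp {R : realType} (f th : {set 'I_3} -> R) :
  objective f th = objv (f (mk false false false)) (f (mk true false false))
    (f (mk false true false)) (f (mk false false true)) (f (mk true true false))
    (f (mk true false true)) (f (mk false true true)) (f (mk true true true))
    (th (mk false false false)) (th (mk true false false))
    (th (mk false true false)) (th (mk false false true)) (th (mk true true false))
    (th (mk true false true)) (th (mk false true true)) (th (mk true true true)).
Proof. rewrite /objective sum3E /objv; ring. Qed.

Lemma objT_exp {R : realType} (f : {set 'I_3} -> R) x t :
  objective f (thetaT x t) = objt (f (mk false false false)) (f (mk true false false))
    (f (mk false true false)) (f (mk false false true)) (f (mk true true false))
    (f (mk true false true)) (f (mk false true true)) (f (mk true true true))
    (x o0) (x o1) (x o2) t.
Proof. by rewrite obj_exp /thetaT !mk0 !mk1 !mk2. Qed.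

Lemma key_ex {R : realType} (f : {set 'I_3} -> R) (x : 'I_3 -> R) :
  (forall S, 0 <= f S) ->
  monotone_setfun f ->
  submodular_setfun f ->
  (forall i, 0 <= x i <= 1) ->
  exists t, feasT (x o0) (x o1) (x o2) t /\
    forall th, cc_feasible x th -> objective f th <= 4/3 * objective f (thetaT x t).
Proof.
move=> fpos fmono fsub xb.
have hx0 := xb o0; have hx1 := xb o1; have hx2 := xb o2.
have he := fpos (mk false false false).
have mA0 : f (mk false true true) <= f (mk true true true) by apply: fmono; apply: mk_sub.
have mA1 : f (mk true false true) <= f (mk true true true) by apply: fmono; apply: mk_sub.
have mA2 : f (mk true true false) <= f (mk true true true) by apply: fmono; apply: mk_sub.
have s01 := fsub (mk true false false) (mk false true false).
have s02 := fsub (mk true false false) (mk false false true).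
have s12 := fsub (mk false true false) (mk false false true).
have t01 := fsub (mk true false true) (mk false true true).
have t02 := fsub (mk true true false) (mk false true true).
have t12 := fsub (mk true true false) (mk true false true).
rewrite !mkI !mkU /= in s01 s02 s12 t01 t02 t12.
case: (lerP 0 (f (mk true true true) - f (mk true true false) - f (mk true false true) - f (mk false true true) + f (mk true false false) + f (mk false true false) + f (mk false false true) - f (mk false false false))) => hD.
- have [t [ht htb]] := tmax_ex (x o0) (x o1) (x o2) hx0 hx1 hx2.
  exists t; split => // th hth.
  have [hn hs m0 m1 m2] := cc_vals x th hth.
  have := hn (mk false false false); have := hn (mk true false false);
  have := hn (mk false true false); have := hn (mk false false true);
  have := hn (mk true true false); have := hn (mk true false true);
  have := hn (mk false true true); have := hn (mk true true true).
  move=> n1 n2 n3 n4 n5 n6 n7 n8.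
  rewrite obj_exp objT_exp.
  apply: coreA; try done; lra.
- have [ht _] := tp_ok (x o0) (x o1) (x o2) hx0 hx1 hx2.
  exists (x o0 * x o1 * x o2); split => // th hth.
  have [hn hs m0 m1 m2] := cc_vals x th hth.
  have := hn (mk false false false); have := hn (mk true false false);
  have := hn (mk false true false); have := hn (mk false false true);
  have := hn (mk true true false); have := hn (mk true false true);
  have := hn (mk false true true); have := hn (mk true true true).
  move=> n1 n2 n3 n4 n5 n6 n7 n8.
  rewrite obj_exp objT_exp.
  apply: coreB; try done; lra.
Qed.

Theorem mainTheorem9 (R : realType) (f : {set 'I_3} -> R) (x : 'I_3 -> R) :
  (forall S, 0 <= f S) ->
  monotone_setfun f ->
  submodular_setfun f ->
  (forall i, 0 <= x i <= 1) ->
  (upper_pi_ext f x = 0 /\ concave_closure f x = 0) \/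
  (upper_pi_ext f x != 0 /\
   concave_closure f x / upper_pi_ext f x <= 4%:R / 3%:R).
Proof.
move=> fpos fmono fsub xb.
have [t [ht key]] := key_ex f x fpos fmono fsub xb.
have hpi := thetaT_pi x t ht.
have hcc : cc_feasible x (thetaT x t) by case: hpi.
set th := thetaT x t in hpi hcc key.
have obj0 : 0 <= objective f th.
  rewrite /objective; apply: sumr_ge0 => S _; apply: mulr_ge0 => //.
  by case: hcc.
have supcc : has_sup [set objective f theta | theta in [set theta | cc_feasible x theta]].
  split; first by exists (objective f th); exists th.
  by exists (4/3 * objective f th) => y [th' h' <-]; apply: key.
have suppi : has_sup [set objective f theta | theta in [set theta | pi_feasible x theta]].
  split; first by exists (objective f th); exists th.
  by exists (4/3 * objective f th) => y [th' h' <-]; apply: key; case: h'.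
have Bge : objective f th <= upper_pi_ext f x.
  by apply: sup_upper_bound => //; exists th.
have Age : objective f th <= concave_closure f x.
  by apply: sup_upper_bound => //; exists th.
have Ale : concave_closure f x <= 4/3 * upper_pi_ext f x.
  apply: ge_sup; first by exists (objective f th); exists th.
  move=> y [th' h' <-]; apply: le_trans (key th' h') _.
  by apply: ler_wpM2l => //; lra.
case: (eqVneq (upper_pi_ext f x) 0) => hB.
- left; split => //; apply/eqP; rewrite eq_le; apply/andP; split; lra.
- right; split => //.
  have Bpos : 0 < upper_pi_ext f x by rewrite lt_def hB /=; lra.
  rewrite ler_pdivrMr //; lra.
Qed.
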